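(* Let $\mathcal{A}_i\subset\mathbb{R}^{n_i}$, $i\in\mathbb{N}$, be nonempty closed sets and assume that $\mathcal{A}:=\{x\in X: x_i\in\mathcal{A}_i \text{ for all } i\in\mathbb{N}\}$ is nonempty. Then for every $x\in X$ there exists $y^*\in\mathcal{A}$ such that $|x|_{\mathcal{A}}=\sup_{i\in\mathbb{N}}|x_i|_{\mathcal{A}_i}=|x-y^*|_\infty$.
   Context: For each $i\in\mathbb{N}$ fix a positive integer $n_i$ and a norm $|\cdot|$ on $\mathbb{R}^{n_i}$. Let $X:=\{x=(x_i)_{i\in\mathbb{N}}: x_i\in\mathbb{R}^{n_i},\ \sup_i|x_i|<\infty\}$ with norm $|x|_\infty:=\sup_i|x_i|$. For $z\in\mathbb{R}^{n_i}$, $|z|_{\mathcal{A}_i}:=\inf_{y\in\mathcal{A}_i}|z-y|$, and for $x\in X$, $|x|_{\mathcal{A}}:=\inf_{y\in\mathcal{A}}|x-y|_\infty$. *)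

(* Defs.v *)
From HB Require Import structures.
From mathcomp Require Import all_boot all_order all_algebra.
From mathcomp Require Import all_classical all_reals all_analysis.
Set Implicit Arguments. Unset Strict Implicit. Unset Printing Implicit Defensive.
Import Order.TTheory GRing.Theory Num.Theory.
Import numFieldNormedType.Exports.
Local Open Scope classical_set_scope.
Local Open Scope ring_scope.

Definition is_norm (R : realType) (m : nat) (N : 'rV[R]_m -> R) : Prop :=
  [/\ (forall v, N v = 0 -> v = 0),
      (forall (a : R) v, N (a *: v) = `|a| * N v) &
      (forall u v, N (u + v) <= N u + N v)].

(* Elements of X: sequences (x_i) with x_i in R^(n i) and sup_i |x_i| < oo. *)
Definition inX (R : realType) (n : nat -> nat) (N : forall i, 'rV[R]_(n i) -> R)
  (x : forall i, 'rV[R]_(n i)) : Prop :=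
  exists M : R, forall i, N i (x i) <= M.

Definition supnorm (R : realType) (n : nat -> nat) (N : forall i, 'rV[R]_(n i) -> R)
  (x : forall i, 'rV[R]_(n i)) : R :=
  sup [set N i (x i) | i in [set: nat]].

Definition seqsub (R : realType) (n : nat -> nat) (x y : forall i, 'rV[R]_(n i)) :
  forall i, 'rV[R]_(n i) := fun i => x i - y i.

Definition dist_comp (R : realType) (m : nat) (N : 'rV[R]_m -> R)
  (Ai : set 'rV[R]_m) (z : 'rV[R]_m) : R :=
  inf [set N (z - y) | y in Ai].

Definition prodset (R : realType) (n : nat -> nat) (N : forall i, 'rV[R]_(n i) -> R)
  (A : forall i, set 'rV[R]_(n i)) : set (forall i, 'rV[R]_(n i)) :=
  [set y | inX N y /\ forall i, A i (y i)].

Definition dist_prod (R : realType) (n : nat -> nat) (N : forall i, 'rV[R]_(n i) -> R)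
  (A : forall i, set 'rV[R]_(n i)) (x : forall i, 'rV[R]_(n i)) : R :=
  inf [set supnorm N (seqsub x y) | y in prodset N A].

(* Main.v *)
Require Import Defs.
From HB Require Import structures.
From mathcomp Require Import all_boot all_order all_algebra.
From mathcomp Require Import all_classical all_reals all_analysis.
From mathcomp Require Import lra.
Import Order.TTheory GRing.Theory Num.Theory.
Import numFieldNormedType.Exports.
Local Open Scope classical_set_scope.
Local Open Scope ring_scope.

Section NormFacts.
Variables (R : realType) (m : nat) (N : 'rV[R]_m -> R).
Hypothesis hN : is_norm N.

Lemma N0 : N 0 = 0.
Proof. case: hN => _ hZ _. by rewrite -(scale0r (0 : 'rV[R]_m)) hZ normr0 mul0r. Qed.

Lemma NN v : N (- v) = N v.
Proof. case: hN => _ hZ _. by rewrite -scaleN1r hZ normrN1 mul1r. Qed.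

Lemma Nge0 v : 0 <= N v.
Proof.
case: hN => _ _ hD. have := hD v (- v).
rewrite subrr.
rewrite N0.
rewrite NN.
lra.
Qed.

Lemma NB u v : N (u - v) = N (v - u).
Proof. by rewrite -NN opprB. Qed.

Lemma NsumB u v : N u <= N v + N (u - v).
Proof. case: hN => _ _ hD. by rewrite -{1}(subrK v u) addrC hD. Qed.

Lemma coord_le (v : 'rV[R]_m) j : `|v 0 j| <= `|v|.
Proof.
rewrite [leRHS]/Num.Def.normr /= mx_normrE; apply/bigmax_geP; right => /=.
by exists (0, j).
Qed.

Lemma N_upper : exists C, 0 < C /\ forall v, N v <= C * `|v|.
Proof.
case: hN => _ hZ hD.
exists (1 + \sum_(j < m) N 'e_j); split.
  by rewrite ltr_pwDl // sumr_ge0 // => j _; exact: Nge0.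
move=> v; rewrite {1}(row_sum_delta v).
have H : forall (I : seq 'I_m) , N (\sum_(j <- I) v 0 j *: 'e_j) <= `|v| * \sum_(j <- I) N 'e_j.
  elim=> [|j s IH]; first by rewrite !big_nil N0 mulr0.
  rewrite !big_cons mulrDr; apply: le_trans (hD _ _) _.
  apply: lerD => //; rewrite hZ ler_wpM2r //; [exact: Nge0 | exact: coord_le].
apply: le_trans (H _) _.
by rewrite mulrC ler_wpM2r // ?normr_ge0 // lerDr.
Qed.

Lemma N_lip u v : `|N u - N v| <= N (u - v).
Proof.
rewrite ler_norml; apply/andP; split.
  have := NsumB v u. rewrite NB. lra.
have := NsumB u v. lra.
Qed.

Lemma N_cont : continuous N.
Proof.
have [C [C0 HC]] := N_upper.
move=> x; apply/(@cvgrPdist_le _ _ _ _ (nbhs_filter x)) => e e0.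
idtac.
apply/(@nbhs_normP R (matrix R 1 m)); exists (e / C) => /=; first by rewrite divr_gt0.
move=> y /= hy.
apply: le_trans (N_lip _ _) _.
apply: le_trans (HC _) _.
rewrite -ler_pdivlMl // mulrC. exact: ltW.
Qed.

Lemma N_pos v : v != 0 -> 0 < N v.
Proof.
case: hN => h0 _ _ => v0; rewrite lt_neqAle Nge0 andbT eq_sym.
by apply/negP => /eqP /h0 /eqP; apply/negP.
Qed.

Lemma N_lower : exists c, 0 < c /\ forall v, c * `|v| <= N v.
Proof.
case: hN => _ hZ _.
set S := [set v : 'rV[R]_m | `|v| = 1].
have inS v : v != 0 -> S (`|v|^-1 *: v).
  move=> v0; rewrite /S /= normrZ ger0_norm ?invr_ge0 // mulVf //.
  by rewrite normr_eq0.
case: (pselect (S !=set0)) => [S0|S0]; last first.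
  exists 1; split => // v.
  have [->|v0] := eqVneq v 0; first by rewrite normr0 mulr0 Nge0.
  by exfalso; apply: S0; exists (`|v|^-1 *: v); exact: inS.
have cS : compact S.
  apply: bounded_closed_compact.
    rewrite /bounded_set /bounded_near /globally /=.
    near=> M => v /= ->; near: M; exact: nbhs_pinfty_ge.
  have -> : S = (@Num.Def.normr _ _) @^-1` ([set x : R | x <= 1] `&` [set x | 1 <= x]).
    apply/seteqP; split => v /=; first by move=> ->; rewrite lexx.
    by case=> h1 h2; apply/eqP; rewrite eq_le h1 h2.
  apply: (continuous_closedP _).1; first exact: norm_continuous.
  apply: closedI; [exact: closed_le | exact: closed_ge].
have [c0 c0S hmin] := EVT_min_rV S0 cS (continuous_subspaceT N_cont).
have c00 : c0 != 0.
  move: c0S; rewrite inE /S /= => h; apply/eqP => h'; move: h; rewrite h' normr0.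
  by move/eqP; rewrite eq_sym oner_eq0.
exists (N c0); split; first exact: N_pos.
move=> v; have [->|v0] := eqVneq v 0; first by rewrite normr0 mulr0 Nge0.
have := hmin _ (mem_set (inS v v0)); rewrite hZ ger0_norm ?invr_ge0 //.
have vp : 0 < `|v| by rewrite normr_gt0.
by rewrite ler_pdivlMl // mulrC.
Unshelve. all: by end_near.
Qed.

Lemma Nz_cont (z : 'rV[R]_m) : continuous (fun y : 'rV[R]_m => N (z - y)).
Proof.
have [C [C0 HC]] := N_upper.
move=> x; apply/(@cvgrPdist_le _ _ _ _ (nbhs_filter x)) => e e0.
apply/(@nbhs_normP R (matrix R 1 m)); exists (e / C) => /=; first by rewrite divr_gt0.
move=> y /= hy.
apply: le_trans (N_lip _ _) _.
have -> : z - x - (z - y) = y - x by rewrite addrC opprB addrA subrK.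
rewrite NB.
apply: le_trans (HC _) _.
rewrite -ler_pdivlMl // mulrC. exact: ltW.
Qed.

Lemma N_argmin (A : set 'rV[R]_m) (z : 'rV[R]_m) : A !=set0 -> closed A ->
  exists2 y0, A y0 & forall y, A y -> N (z - y0) <= N (z - y).
Proof.
case=> a Aa Acl.
have [c [c0 Hc]] := N_lower.
set K := A `&` [set y | N (z - y) <= N (z - a)].
have K0 : K !=set0 by exists a; split => //=.
have cK : compact K.
  apply: bounded_closed_compact.
    rewrite /bounded_set /bounded_near /globally /=.
    near=> M => y [_ /= hy].
    have h1 : `|y| <= `|z| + `|z - y|.
      have e : z - (z - y) = y by rewrite opprB addrC subrK.
      by have := ler_normB z (z - y); rewrite e.
    have h2 : `|z - y| <= N (z - a) / c.
      by rewrite ler_pdivlMr // mulrC; apply: le_trans (Hc _) hy.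
    apply: le_trans h1 _; apply: le_trans (lerD (lexx _) h2) _.
    near: M; apply: nbhs_pinfty_ge; exact: num_real.
  apply: closedI => //.
  exact: ((continuous_closedP _).1 (Nz_cont z) _ (@closed_le _ (N (z - a)))).
have [y0 y0K hmin] := EVT_min_rV K0 cK (continuous_subspaceT (Nz_cont z)).
move: (y0K); rewrite inE => -[Ay0 /= hy0].
exists y0 => // y Ay.
case: (lerP (N (z - y)) (N (z - a))) => hy.
  by apply: hmin; rewrite inE.
by apply: le_trans hy0 (ltW hy).
Unshelve. all: by end_near.
Qed.

End NormFacts.
Arguments N_argmin {R m N}.
Arguments Nge0 {R m N}.
Arguments NN {R m N}.
Arguments NsumB {R m N}.
Arguments NB {R m N}.

Theorem lemma2 (R : realType) (n : nat -> nat)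
  (N : forall i, 'rV[R]_(n i) -> R) (A : forall i, set 'rV[R]_(n i)) :
  (forall i, is_norm (N i)) ->
  (forall i, A i !=set0) ->
  (forall i, closed (A i)) ->
  prodset N A !=set0 ->
  forall x : forall i, 'rV[R]_(n i), inX N x ->
  exists2 ystar, prodset N A ystar &
    dist_prod N A x = sup [set dist_comp (N i) (A i) (x i) | i in [set: nat]] /\
    sup [set dist_comp (N i) (A i) (x i) | i in [set: nat]] = supnorm N (seqsub x ystar).
Proof.
move=> hN hA0 hAcl [a [[Ma hMa] hAa]] x [Mx hMx].
have H i := N_argmin (hN i) (A i) (x i) (hA0 i) (hAcl i).
pose ys := fun i => s2val (cid2 (H i)).
have ysA i : A i (ys i) := s2valP (cid2 (H i)).
have ysmin i y : A i y -> N i (x i - ys i) <= N i (x i - y) := s2valP' (cid2 (H i)) y.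
have dc i : dist_comp (N i) (A i) (x i) = N i (x i - ys i).
  apply/le_anti/andP; split.
    apply: ge_inf; last by exists (ys i).
    by exists 0 => _ [y _ <-]; exact: (Nge0 (hN i)).
  apply: lb_le_inf; first by exists (N i (x i - ys i)), (ys i).
  by move=> _ [y Ay <-]; exact: ysmin.
have SE : [set dist_comp (N i) (A i) (x i) | i in [set: nat]] =
          [set N i (seqsub x ys i) | i in [set: nat]].
  by apply: eq_imagel => i _; rewrite dc.
have Nsub i (u v : 'rV[R]_(n i)) : N i (u - v) <= N i u + N i v.
  by case: (hN i) => _ _ hD; apply: le_trans (hD _ _) _; rewrite (NN (hN i)).
have bnd i : N i (x i - ys i) <= Mx + Ma.
  apply: le_trans (ysmin i _ (hAa i)) _; apply: le_trans (Nsub _ _ _) _.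
  exact: lerD.
have ysP : prodset N A ys.
  split => //; exists (Mx + (Mx + Ma)) => i.
  apply: le_trans (NsumB (hN i) (ys i) (x i)) _; rewrite (NB (hN i)).
  exact: lerD.
exists ys => //.
rewrite SE; split => //.
set D := sup _.
have lbD y : prodset N A y -> D <= supnorm N (seqsub x y).
  case=> [[My hMy] hAy].
  apply: ge_sup; first by exists (N 0%N (seqsub x ys 0%N)), 0%N.
  move=> _ [i _ <-]; apply: le_trans (ysmin i _ (hAy i)) _.
  apply: ub_le_sup; last by exists i.
  exists (Mx + My) => _ [j _ <-]; apply: le_trans (Nsub _ _ _) _.
  exact: lerD.
rewrite /dist_prod; apply/le_anti/andP; split.
  apply: ge_inf; last by exists ys.
  by exists D => _ [y Py <-]; exact: lbD.
apply: lb_le_inf; first by exists (supnorm N (seqsub x ys)), ys.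
by move=> _ [y Py <-]; exact: lbD.
Qed.
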